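(* Let $\Psi$ be an $n\times n$ complex matrix whose spectrum lies in the open unit disk $\mathcal{D}$. Let $B$ be a Blaschke product of degree at most $n-1$ that maximizes $\|\hat B(\Psi)\|$ over all Blaschke products $\hat B$ of degree at most $n-1$, and assume $\|B(\Psi)\|>1$. If $v_1$ is a right singular vector of $B(\Psi)$ corresponding to the largest singular value $\sigma_1$, then $\langle B(\Psi)v_1,v_1\rangle=0$.
   Context: A Blaschke product of degree at most $n-1$ is a function $B(z)=e^{i\theta}\prod_{j=1}^{n-1}\frac{z-\alpha_j}{1-\bar\alpha_j z}$ with $\theta\in\mathbb{R}$ and $|\alpha_j|\le 1$ (factors with $|\alpha_j|=1$ are interpreted as the corresponding unimodular constants, so the degree may be less than $n-1$). $\|\cdot\|$ is the matrix 2-norm and $\langle\cdot,\cdot\rangle$ the standard inner product on $\mathbb{C}^n$. *)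

(* Defs.v *)
From HB Require Import structures.
From mathcomp Require Import all_boot all_order all_algebra.
From mathcomp Require Import complex.
From mathcomp Require Import classical_sets reals.
Set Implicit Arguments. Unset Strict Implicit. Unset Printing Implicit Defensive.
Import Order.TTheory GRing.Theory Num.Theory.
Local Open Scope ring_scope.
Local Open Scope classical_set_scope.

Section Defs.
Variable R : realType.
Local Notation C := R[i].

Definition cabs (z : C) : R := Normc.normc z.

Definition vnorm n (x : 'cV[C]_n) : R :=
  Num.sqrt (\sum_(i < n) cabs (x i 0) ^+ 2).

Definition cinner n (x y : 'cV[C]_n) : C :=
  \sum_(i < n) x i 0 * conjc (y i 0).

Definition adjmx m n (A : 'M[C]_(m, n)) : 'M[C]_(n, m) := map_mx conjc A^T.

Definition mxnorm2 n (A : 'M[C]_n) : R :=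
  sup [set vnorm (A *m x) | x in [set x : 'cV[C]_n | vnorm x = 1]].

(* one Blaschke factor (z - a)/(1 - conj(a) z) evaluated at the matrix Psi;
   when |a| = 1 the factor is the unimodular constant -a *)
Definition blaschke_factor_mx n (a : C) (Psi : 'M[C]_n) : 'M[C]_n :=
  if cabs a == 1 then (- a)%:M
  else (Psi - a%:M) *m invmx (1%:M - conjc a *: Psi).

Definition blaschke_mx n k (c : C) (a : 'I_k -> C) (Psi : 'M[C]_n) : 'M[C]_n :=
  c *: \big[mulmx/1%:M]_(j < k) blaschke_factor_mx (a j) Psi.

Definition blaschke_params k (c : C) (a : 'I_k -> C) : Prop :=
  cabs c = 1 /\ forall j, cabs (a j) <= 1.

End Defs.

(* Main.v *)
Require Import Defs.
From HB Require Import structures.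
From mathcomp Require Import all_boot all_order all_algebra.
From mathcomp Require Import complex.
From mathcomp Require Import classical_sets reals.
From mathcomp Require Import ring lra zify.
Import Order.TTheory GRing.Theory Num.Theory.
Local Open Scope ring_scope.

Module Helpers.
Set Implicit Arguments. Unset Strict Implicit. Unset Printing Implicit Defensive.
Section Aux.
Variable R : realType.
Local Notation C := R[i].

Lemma cabs_ge0 (z : C) : 0 <= cabs z.
Proof. by case: z => x y; rewrite /cabs /= sqrtr_ge0. Qed.

Lemma cabs2 (x y : R) : cabs (x +i* y)%C ^+ 2 = x ^+ 2 + y ^+ 2.
Proof. by rewrite /cabs /= sqr_sqrtr // addr_ge0 // sqr_ge0. Qed.

Lemma cabs2C (z : C) : ((cabs z ^+ 2)%:C)%C = z * conjc z.
Proof.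
case: z => x y; rewrite cabs2 /=.
apply/eqP; rewrite eq_complex /=; apply/andP; split; apply/eqP; ring.
Qed.

Lemma cabsM (x y : C) : cabs (x * y) = cabs x * cabs y.
Proof. exact: Normc.normcM. Qed.

Lemma cabsD (x y : C) : cabs (x + y) <= cabs x + cabs y.
Proof. exact: (@le_normcD R x y). Qed.

Lemma cabsN (x : C) : cabs (- x) = cabs x.
Proof. exact: (@normcN R x). Qed.

Lemma cabsJ (x : C) : cabs (conjc x) = cabs x.
Proof. by case: x => a b; rewrite /cabs /= sqrrN. Qed.

Lemma cabs_eq0 (x : C) : cabs x = 0 -> x = 0.
Proof. exact: Normc.eq0_normc. Qed.

Lemma cabs0 : cabs (0 : C) = 0.
Proof. exact: Normc.normc0. Qed.

Lemma cabs1 : cabs (1 : C) = 1.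
Proof. exact: Normc.normc1. Qed.

Lemma cabsV (x : C) : cabs (x^-1) = (cabs x)^-1.
Proof. exact: Normc.normcV. Qed.

Lemma cabsR (x : R) : cabs (x%:C)%C = `|x|.
Proof. by rewrite /cabs /= expr0n /= addr0 sqrtr_sqr. Qed.

Lemma cabs_sum I (r : seq I) (F : I -> C) :
  cabs (\sum_(i <- r) F i) <= \sum_(i <- r) cabs (F i).
Proof.
elim: r => [|x r IH]; first by rewrite !big_nil cabs0.
rewrite !big_cons; apply: le_trans (cabsD _ _) _; exact: lerD.
Qed.

Lemma cabs_prod I (r : seq I) (F : I -> C) :
  cabs (\prod_(i <- r) F i) = \prod_(i <- r) cabs (F i).
Proof.
elim: r => [|x r IH]; first by rewrite !big_nil cabs1.
by rewrite !big_cons cabsM IH.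
Qed.

Lemma cabsB (x y : C) : cabs x - cabs y <= cabs (x - y).
Proof.
have := cabsD (x - y) y; rewrite subrK; lra.
Qed.

Lemma conj_cabs1 (c : C) : cabs c = 1 -> c * conjc c = 1.
Proof. by move=> h; rewrite -cabs2C h expr1n. Qed.

Lemma cinnerDl n (x y z : 'cV[C]_n) : cinner (x + y) z = cinner x z + cinner y z.
Proof. by rewrite /cinner -big_split; apply: eq_bigr => i _; rewrite mxE mulrDl. Qed.

Lemma cinnerDr n (x y z : 'cV[C]_n) : cinner z (x + y) = cinner z x + cinner z y.
Proof. by rewrite /cinner -big_split; apply: eq_bigr => i _; rewrite mxE rmorphD mulrDr. Qed.

Lemma cinnerZl n k (x y : 'cV[C]_n) : cinner (k *: x) y = k * cinner x y.
Proof. by rewrite /cinner mulr_sumr; apply: eq_bigr => i _; rewrite mxE mulrA. Qed.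

Lemma cinnerZr n k (x y : 'cV[C]_n) : cinner x (k *: y) = conjc k * cinner x y.
Proof.
by rewrite /cinner mulr_sumr; apply: eq_bigr => i _; rewrite mxE rmorphM /=; ring.
Qed.

Lemma cinnerNl n (x y : 'cV[C]_n) : cinner (- x) y = - cinner x y.
Proof. by rewrite -scaleN1r cinnerZl mulN1r. Qed.

Lemma cinnerNr n (x y : 'cV[C]_n) : cinner x (- y) = - cinner x y.
Proof. by rewrite -scaleN1r cinnerZr rmorphN rmorph1 mulN1r. Qed.

Lemma cinnerBl n (x y z : 'cV[C]_n) : cinner (x - y) z = cinner x z - cinner y z.
Proof. by rewrite cinnerDl cinnerNl. Qed.

Lemma cinnerBr n (x y z : 'cV[C]_n) : cinner z (x - y) = cinner z x - cinner z y.
Proof. by rewrite cinnerDr cinnerNr. Qed.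

Lemma cinnerC n (x y : 'cV[C]_n) : cinner y x = conjc (cinner x y).
Proof.
rewrite /cinner rmorph_sum; apply: eq_bigr => i _; rewrite rmorphM /= conjcK; ring.
Qed.

Lemma cinner_adj n (A : 'M[C]_n) (x y : 'cV[C]_n) :
  cinner (A *m x) y = cinner x (adjmx A *m y).
Proof.
rewrite /cinner.
under eq_bigr => i _ do rewrite mxE big_distrl /=.
rewrite exchange_big /=; apply: eq_bigr => j _.
rewrite mxE rmorph_sum big_distrr /=; apply: eq_bigr => i _.
rewrite mxE rmorphM /adjmx !mxE /= conjcK; ring.
Qed.

Lemma vnorm_ge0 n (x : 'cV[C]_n) : 0 <= vnorm x.
Proof. exact: sqrtr_ge0. Qed.

Lemma vnorm2 n (x : 'cV[C]_n) : vnorm x ^+ 2 = \sum_(i < n) cabs (x i 0) ^+ 2.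
Proof. by rewrite /vnorm sqr_sqrtr // sumr_ge0 // => i _; rewrite sqr_ge0. Qed.

Lemma vnorm2C n (x : 'cV[C]_n) : ((vnorm x ^+ 2)%:C)%C = cinner x x.
Proof.
rewrite vnorm2 rmorph_sum /cinner; apply: eq_bigr => i _; exact: cabs2C.
Qed.

End Aux.

Section Aux2.
Variable R : realType.
Local Notation C := R[i].

Lemma vnormZ n (k : C) (x : 'cV[C]_n) : vnorm (k *: x) = cabs k * vnorm x.
Proof.
rewrite /vnorm.
under eq_bigr => i _ do rewrite mxE cabsM exprMn.
rewrite -mulr_sumr sqrtrM ?sqr_ge0 // sqrtr_sqr ger0_norm //; exact: cabs_ge0.
Qed.

Lemma vnorm_eq0 n (x : 'cV[C]_n) : vnorm x = 0 -> x = 0.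
Proof.
move=> h; have h2 : vnorm x ^+ 2 = 0 by rewrite h expr0n.
rewrite vnorm2 in h2.
have := psumr_eq0P (fun i _ => sqr_ge0 (cabs (x i 0))) h2 => hi.
apply/matrixP => i j; rewrite (ord1 j) mxE.
apply: cabs_eq0; apply/eqP; rewrite -sqrf_eq0; apply/eqP; exact: hi.
Qed.

Lemma vnorm0 n : vnorm (0 : 'cV[C]_n) = 0.
Proof.
by rewrite /vnorm big1 ?sqrtr0 // => i _; rewrite mxE cabs0 expr0n.
Qed.

Lemma entry_le_vnorm n (x : 'cV[C]_n) j : cabs (x j 0) <= vnorm x.
Proof.
rewrite -(ler_pXn2r (n := 2)) ?nnegrE ?cabs_ge0 ?vnorm_ge0 //.
rewrite vnorm2 (bigD1 j) //= lerDl; apply: sumr_ge0 => i _; exact: sqr_ge0.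
Qed.

Lemma vnorm_bound_unit n (A : 'M[C]_n) (x : 'cV[C]_n) : vnorm x = 1 ->
  vnorm (A *m x) <= Num.sqrt (\sum_(i < n) (\sum_(j < n) cabs (A i j)) ^+ 2).
Proof.
move=> hx; rewrite /vnorm ler_sqrt; last first.
  by apply: sumr_ge0 => i _; apply: sqr_ge0.
apply: ler_sum => i _.
have h0 : 0 <= cabs ((A *m x) i 0) by apply: cabs_ge0.
rewrite ler_pXn2r ?nnegrE //; last by apply: sumr_ge0 => j _; apply: cabs_ge0.
rewrite mxE. have H := @cabs_sum R _ (index_enum 'I_n) (fun j => A i j * x j 0). apply: le_trans H _; apply: ler_sum => j _.
rewrite cabsM; have := entry_le_vnorm x j; rewrite hx => h1.
have := cabs_ge0 (A i j); have := cabs_ge0 (x j 0); nra.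
Qed.

Lemma mxnorm2_bound n (A : 'M[C]_n) (x : 'cV[C]_n) :
  vnorm (A *m x) <= mxnorm2 A * vnorm x.
Proof.
have [hx|hx] := eqVneq (vnorm x) 0.
  by rewrite hx mulr0 (vnorm_eq0 hx) mulmx0 vnorm0.
have hpos : 0 < vnorm x by rewrite lt_def hx vnorm_ge0.
set k := ((vnorm x)^-1)%:C%C.
have hk : cabs k = (vnorm x)^-1 by rewrite /k cabsR ger0_norm // invr_ge0 vnorm_ge0.
have hy : vnorm (k *: x) = 1 by rewrite vnormZ hk mulVf.
have hub : has_ubound [set vnorm (A *m x) | x in [set x : 'cV[C]_n | vnorm x = 1]].
  exists (Num.sqrt (\sum_(i < n) (\sum_(j < n) cabs (A i j)) ^+ 2)).
  by move=> z [y /= hy1 <-]; apply: vnorm_bound_unit.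
have := ub_le_sup hub (ex_intro2 _ _ (k *: x) hy erefl).
rewrite -scalemxAr vnormZ hk -/(mxnorm2 A) => h.
by rewrite -ler_pdivrMr // mulrC.
Qed.

End Aux2.

Section Refl.
Variable R : realType.
Local Notation C := R[i].

Implicit Types (p q : {poly C}) (k : C).

Definition refl (m : nat) (p : {poly C}) : {poly C} :=
  \poly_(i < m.+1) conjc (p`_(m - i)).

Lemma refl_add m p q : refl m (p + q) = refl m p + refl m q.
Proof.
apply/polyP => i; rewrite coefD !coef_poly; case: ifP => _; last by rewrite addr0.
by rewrite coefD rmorphD.
Qed.

Lemma refl_scale m k p : refl m (k *: p) = conjc k *: refl m p.
Proof.
apply/polyP => i; rewrite coefZ !coef_poly; case: ifP => _; last by rewrite mulr0.
by rewrite coefZ rmorphM.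
Qed.

Lemma refl_opp m p : refl m (- p) = - refl m p.
Proof. by rewrite -scaleN1r refl_scale rmorphN rmorph1 scaleN1r. Qed.

Lemma refl_sub m p q : refl m (p - q) = refl m p - refl m q.
Proof. by rewrite refl_add refl_opp. Qed.

Lemma refl_XM m p : (size p <= m.+1)%N -> refl m.+1 ('X * p) = refl m p.
Proof.
move=> hs; apply/polyP => i; rewrite !coef_poly coefXM.
case: (ltnP i m.+1) => hi.
  rewrite ifT; last lia.
  rewrite ifN; last by apply/eqP; lia.
  by congr conjc; congr (p`_ _); lia.
case: ifP => hi2 //.
have -> : (m.+1 - i = 0)%N by lia.
by rewrite eqxx conjc0.
Qed.

Lemma refl_up m p : (size p <= m.+1)%N -> refl m.+1 p = 'X * refl m p.
Proof.
move=> hs; apply/polyP => i; rewrite coefXM !coef_poly.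
case: i => [|i] /=.
  by rewrite nth_default ?conjc0 //; rewrite subn0.
rewrite ltnS; case: ifP => hi //.
Qed.

Lemma refl_invol m p : (size p <= m.+1)%N -> refl m (refl m p) = p.
Proof.
move=> hs; apply/polyP => i; rewrite !coef_poly.
case: (ltnP i m.+1) => hi.
  have -> : (m - i < m.+1)%N by lia.
  by rewrite conjcK; congr (p`_ _); lia.
by rewrite nth_default // (leq_trans hs hi).
Qed.

Lemma refl_prod I (r : seq I) (F : I -> C) :
  refl (size r) (\prod_(i <- r) ('X - (F i)%:P)) =
  \prod_(i <- r) (1 - conjc (F i) *: 'X).
Proof.
elim: r => [|x r IH].
  rewrite !big_nil; apply/polyP => i; rewrite coef_poly coef1.
  case: i => [|i]; first by rewrite coef1 eqxx conjc1. by rewrite coef1.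
have hs := eq_leq (size_prod_XsubC r F).
rewrite !big_cons /= -IH.
rewrite mulrBl mul_polyC refl_sub refl_XM // refl_scale refl_up //.
by rewrite mulrBl mul1r scalerAl.
Qed.

End Refl.

Section MxCalc.
Variable R : realType.
Local Notation C := R[i].
Variable n' : nat.
Local Notation n := n'.+1.
Variable Psi : 'M[C]_n.
Hypothesis hPsi : forall lambda : C, eigenvalue Psi lambda -> cabs lambda < 1.
Local Notation hm := (horner_mx Psi).

Lemma hmM p q : hm (p * q) = hm p *m hm q.
Proof. by rewrite rmorphM. Qed.

Lemma hm_comm p q : hm p *m hm q = hm q *m hm p.
Proof. by rewrite -!hmM mulrC. Qed.

Lemma inv_comm (A B : 'M[C]_n) : A \in unitmx -> A *m B = B *m A ->
  invmx A *m B = B *m invmx A.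
Proof.
move=> hA hAB.
rewrite -[invmx A *m B]mulmx1 -(mulmxV hA) !mulmxA -[invmx A *m B *m A]mulmxA -hAB.
by rewrite mulmxA mulVmx // mul1mx.
Qed.

Lemma invmx_mul (A B : 'M[C]_n) : A \in unitmx -> B \in unitmx ->
  invmx (A *m B) = invmx B *m invmx A.
Proof.
move=> hA hB; have hAB : A *m B \in unitmx by rewrite unitmx_mul hA hB.
rewrite -[invmx (A *m B)]mulmx1.
have -> : (1%:M : 'M[C]_n) = A *m B *m (invmx B *m invmx A).
  by rewrite -mulmxA (mulmxA B) mulmxV // mul1mx mulmxV.
by rewrite mulmxA mulVmx // mul1mx.
Qed.

Lemma hmQ (k : C) : hm (1 - k *: 'X) = 1%:M - k *: Psi.
Proof. by rewrite rmorphB rmorph1 /= horner_mxZ horner_mx_X. Qed.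

Lemma hmP z : hm ('X - z%:P) = Psi - z%:M.
Proof. by rewrite rmorphB /= horner_mx_X horner_mx_C. Qed.

Lemma unit_Q (z : C) : cabs z <= 1 -> hm (1 - conjc z *: 'X) \in unitmx.
Proof.
move=> hz; rewrite hmQ; set k := conjc z.
case hu: (1%:M - k *: Psi \in unitmx); first done.
suff : False by [].
have : \det (1%:M - k *: Psi) == 0.
  by move: hu; rewrite unitmxE unitfE => /negbT; rewrite negbK.
move/det0P => [v v0 hv].
have hv2 : v = k *: (v *m Psi).
  by apply/eqP; rewrite -subr_eq0 scalemxAr -{1}(mulmx1 v) -mulmxBr hv.
have k0 : k != 0.
  by apply: contra v0 => /eqP k0; rewrite hv2 k0 scale0r.
have : eigenvalue Psi k^-1.
  apply/eigenvalueP; exists v => //.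
  by rewrite {2}hv2 scalerA mulVf // scale1r.
move/hPsi; rewrite cabsV /k cabsJ => h.
have hpos : 0 < cabs z.
  rewrite lt_def cabs_ge0 andbT; apply/eqP => hz0.
  by move: k0; rewrite /k (cabs_eq0 hz0) conjc0 eqxx.
have : cabs z * (cabs z)^-1 = 1 by rewrite mulfV // gt_eqF.
nra.
Qed.

Lemma factor_eq (z : C) : cabs z <= 1 ->
  blaschke_factor_mx z Psi = hm ('X - z%:P) *m invmx (hm (1 - conjc z *: 'X)).
Proof.
move=> hz; rewrite /blaschke_factor_mx; case: ifP => h1.
  have hzz : z * conjc z = 1 by apply: conj_cabs1; apply/eqP.
  have -> : 'X - z%:P = (- z) *: (1 - conjc z *: 'X).
    by rewrite scalerBr scalerA mulNr hzz scaleN1r opprK alg_polyC polyCN addrC.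
  rewrite linearZ /= -scalemxAl mulmxV ?unit_Q //.
  by rewrite scale_scalar_mx mulr1.
by rewrite hmP hmQ.
Qed.

Lemma unit_prod k (Q : 'I_k -> {poly C}) : (forall j, hm (Q j) \in unitmx) ->
  hm (\prod_(j < k) Q j) \in unitmx.
Proof.
elim: k Q => [|k IH] Q hQ; first by rewrite big_ord0 rmorph1 unitmx1.
by rewrite big_ord_recl hmM unitmx_mul hQ IH.
Qed.

Lemma prod_eq k (P Q : 'I_k -> {poly C}) : (forall j, hm (Q j) \in unitmx) ->
  \big[mulmx/1%:M]_(j < k) (hm (P j) *m invmx (hm (Q j))) =
  hm (\prod_(j < k) P j) *m invmx (hm (\prod_(j < k) Q j)).
Proof.
elim: k P Q => [|k IH] P Q hQ.
  have h1 : hm 1 = 1%:M by rewrite -polyC1 horner_mx_C.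
  by rewrite !big_ord0 h1 invmx1 mulmx1.
rewrite !big_ord_recl IH //.
set Pr := \prod_(i < k) P (lift ord0 i).
set Qr := \prod_(i < k) Q (lift ord0 i).
have hQr : hm Qr \in unitmx by apply: unit_prod.
rewrite hmM (hmM (Q ord0)) (hm_comm (Q ord0)) invmx_mul ?hQ //.
rewrite -!mulmxA; congr (_ *m _); rewrite !mulmxA; congr (_ *m _).
by rewrite inv_comm ?hQ // hm_comm.
Qed.

Lemma blaschke_eq k (c : C) (a : 'I_k -> C) : (forall j, cabs (a j) <= 1) ->
  blaschke_mx c a Psi =
  c *: (hm (\prod_(j < k) ('X - (a j)%:P)) *m
        invmx (hm (\prod_(j < k) (1 - conjc (a j) *: 'X)))).
Proof.
move=> ha; rewrite /blaschke_mx -prod_eq; last by move=> j; apply: unit_Q.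
by congr (_ *: _); apply: eq_bigr => j _; rewrite factor_eq.
Qed.

End MxCalc.

Section Compose.
Variable R : realType.
Local Notation C := R[i].

Lemma key_ineq (a z : C) : cabs a <= 1 -> 1 <= cabs z ->
  cabs (1 - conjc a * z) <= cabs (z - a).
Proof.
move=> ha hz.
rewrite -(ler_pXn2r (n:=2)) ?nnegrE ?cabs_ge0 //.
have ha0 := cabs_ge0 a.
have ha2 : cabs a ^+ 2 <= 1 by nra.
have hz2 : 1 <= cabs z ^+ 2 by nra.
move: ha2 hz2; case: a {ha ha0} => a1 a2; case: z {hz} => z1 z2.
have -> : 1 - conjc (a1 +i* a2)%C * (z1 +i* z2)%C =
          ((1 - (a1 * z1 + a2 * z2)) +i* (a2 * z1 - a1 * z2))%C.
  by apply/eqP; rewrite eq_complex /=; apply/andP; split; apply/eqP; ring.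
have -> : (z1 +i* z2)%C - (a1 +i* a2)%C = ((z1 - a1) +i* (z2 - a2))%C.
  by apply/eqP; rewrite eq_complex /=; apply/andP; split; apply/eqP; ring.
rewrite !cabs2 => ha2 hz2; nra.
Qed.

Lemma size_index_ord k : size (index_enum 'I_k) = k.
Proof. by rewrite /index_enum; unlock; rewrite -enumT size_enum_ord. Qed.

Variable n' : nat.
Local Notation n := n'.+1.
Variable Psi : 'M[C]_n.
Hypothesis hPsi : forall lambda : C, eigenvalue Psi lambda -> cabs lambda < 1.
Local Notation hm := (horner_mx Psi).

Lemma compose (c : C) (a : 'I_n' -> C) (t : C) :
  cabs c = 1 -> (forall j, cabs (a j) <= 1) -> cabs t < 1 ->
  exists c' (b : 'I_n' -> C), blaschke_params c' b /\
    blaschke_mx c' b Psi *m (1%:M - conjc t *: blaschke_mx c a Psi)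
      = blaschke_mx c a Psi - t%:M.
Proof.
move=> hc ha ht.
have hcc : c * conjc c = 1 by apply: conj_cabs1.
set P := \prod_(j < n') ('X - (a j)%:P).
set Q := \prod_(j < n') (1 - conjc (a j) *: 'X).
have hsz := size_index_ord n'.
have hsP : size P = n'.+1 by rewrite size_prod_XsubC hsz.
have hQ : refl n' P = Q.
  by have := refl_prod (index_enum 'I_n') a; rewrite hsz.
have hPQ : refl n' Q = P by rewrite -hQ refl_invol // hsP.
have hsQ : (size Q <= n'.+1)%N by rewrite -hQ size_poly.
set N := c *: P - t *: Q.
have P0 : cabs (P`_0) <= 1.
  rewrite -horner_coef0 /P horner_prod cabs_prod.
  set pr := \prod_(_ < _) _; suff : 0 <= pr <= 1 by case/andP.
  apply: (big_ind (fun x => 0 <= x <= 1)); first by rewrite ler01 lexx.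
    move=> x y /andP[hx0 hx1] /andP[hy0 hy1]; apply/andP; split; nra.
  move=> j _; rewrite hornerXsubC sub0r cabsN cabs_ge0; exact: ha.
have hNm : N`_n' = c - t * conjc (P`_0).
  rewrite coefB !coefZ -hQ coef_poly ltnSn subnn.
  have : lead_coef P = 1 by apply: lead_coef_prod_XsubC.
  by rewrite lead_coefE hsP /= => ->; rewrite mulr1.
have hNm0 : N`_n' != 0.
  rewrite hNm subr_eq0; apply/eqP => h.
  have := cabsM t (conjc P`_0); rewrite -h cabsJ hc => h2.
  have := cabs_ge0 t; have := cabs_ge0 (P`_0); nra.
have hsN : size N = n'.+1.
  apply/eqP; rewrite eqn_leq; apply/andP; split.
    apply/leq_sizeP => j hj.
    rewrite coefB !coefZ !nth_default ?mulr0 ?subr0 //; first exact: leq_trans hsQ hj.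
    by rewrite hsP.
  rewrite ltnNge; apply: contra hNm0 => hle; apply/eqP; exact: nth_default.
have [rs hrs] := closed_field_poly_normal N.
set lam := lead_coef N in hrs.
have hlam : lam != 0 by rewrite lead_coef_eq0 -size_poly_eq0 hsN.
have hsrs : size rs = n'.
  by have := congr1 (fun p : {poly C} => size p) hrs; rewrite hsN size_scale // size_prod_XsubC => -[].
set b := fun j : 'I_n' => nth 0 rs j.
have hprodb : forall F : C -> {poly C}, \prod_(z <- rs) F z = \prod_(j < n') F (b j).
  by move=> F; rewrite (big_nth 0) hsrs big_mkord.
set P' := \prod_(j < n') ('X - (b j)%:P).
set Q' := \prod_(j < n') (1 - conjc (b j) *: 'X).
have hN : N = lam *: P' by rewrite {1}hrs hprodb.
have hb : forall j, cabs (b j) <= 1.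
  move=> j; rewrite leNgt; apply/negP => hz.
  have hroot : N.[b j] = 0.
    have : root (\prod_(z <- rs) ('X - z%:P)) (b j).
      by rewrite root_prod_XsubC mem_nth // hsrs.
    by move/rootP => h0; rewrite hrs hornerZ h0 mulr0.
  move: hroot; rewrite /N hornerD hornerN !hornerZ.
  set z := b j.
  have hPz : P.[z] = \prod_(i < n') (z - a i).
    by rewrite /P horner_prod; apply: eq_bigr => i _; rewrite hornerXsubC.
  have hQz : Q.[z] = \prod_(i < n') (1 - conjc (a i) * z).
    by rewrite /Q horner_prod; apply: eq_bigr => i _; rewrite !hornerE.
  have hPpos : 0 < cabs P.[z].
    rewrite hPz cabs_prod; apply: prodr_gt0 => i _.
    have := cabsB z (a i); have := ha i; lra.
  have hQle : cabs Q.[z] <= cabs P.[z].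
    rewrite hPz hQz !cabs_prod; apply: ler_prod => i _.
    by rewrite cabs_ge0 /= key_ineq // ltW.
  move=> h0; have := cabsB (c * P.[z]) (t * Q.[z]).
  rewrite h0 cabs0 !cabsM hc mul1r.
  have := cabs_ge0 t; have := cabs_ge0 Q.[z]; nra.
have hreflN : refl n' N = conjc c *: Q - conjc t *: P.
  by rewrite /N refl_sub !refl_scale hQ hPQ.
have hreflN2 : refl n' N = conjc lam *: Q'.
  have hr := refl_prod rs (fun z => z); rewrite hsrs in hr.
  by rewrite hrs refl_scale hr hprodb.
have hD : Q - (conjc t * c) *: P = (c * conjc lam) *: Q'.
  rewrite -[(c * _) *: Q']scalerA -hreflN2 hreflN scalerBr !scalerA hcc scale1r.
  by rewrite [c * conjc t]mulrC.
have hc0 : c != 0 by apply/eqP => h0; move: hc; rewrite h0 cabs0; lra.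
have hclam : c * conjc lam != 0 by rewrite mulf_neq0 // conjc_eq0.
set c' := lam / (c * conjc lam).
exists c', b; split.
  split; last exact: hb.
  have hl0 : cabs lam != 0.
    by apply/eqP => h0; move: hlam; rewrite (cabs_eq0 h0) eqxx.
  by rewrite /c' cabsM cabsV cabsM hc cabsJ mul1r mulfV.
have hUQ : hm Q \in unitmx.
  by apply: unit_prod => j; apply: unit_Q.
have hUQ' : hm Q' \in unitmx.
  by apply: unit_prod => j; apply: unit_Q.
rewrite (blaschke_eq hPsi) // (blaschke_eq hPsi c) // -/P -/Q -/P' -/Q'.
have h1 : 1%:M - conjc t *: (c *: (hm P *m invmx (hm Q))) =
          hm (Q - (conjc t * c) *: P) *m invmx (hm Q).
  rewrite rmorphB /= horner_mxZ mulmxBl mulmxV // scalerA -scalemxAl.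
  by [].
rewrite h1 hD horner_mxZ.
rewrite -!scalemxAl -scalemxAr scalerA divfK // -mulmxA (mulmxA (invmx (hm Q'))).
rewrite mulVmx // mul1mx scalemxAl -horner_mxZ -hN /N rmorphB /= !horner_mxZ.
by rewrite mulmxBl -!scalemxAl mulmxV // scalemx1.
Qed.

End Compose.

End Helpers.
Import Helpers.
Unset Implicit Arguments.

Theorem theorem2 (R : realType) (n : nat) (Psi : 'M[R[i]]_n)
  (c : R[i]) (a : 'I_n.-1 -> R[i]) (v1 : 'cV[R[i]]_n) :
  (forall lambda : R[i], eigenvalue Psi lambda -> cabs lambda < 1) ->
  blaschke_params c a ->
  (forall (c' : R[i]) (a' : 'I_n.-1 -> R[i]), blaschke_params c' a' ->
     mxnorm2 (blaschke_mx c' a' Psi) <= mxnorm2 (blaschke_mx c a Psi)) ->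
  1 < mxnorm2 (blaschke_mx c a Psi) ->
  v1 != 0 ->
  adjmx (blaschke_mx c a Psi) *m blaschke_mx c a Psi *m v1
    = (((mxnorm2 (blaschke_mx c a Psi)) ^+ 2)%:C)%C *: v1 ->
  cinner (blaschke_mx c a Psi *m v1) v1 = 0.
Proof.
move: Psi a v1; case: n => [|n'] Psi a v1 hPsi [hc ha] hmax hs1 hv0 heig.
  by move: hv0; rewrite (flatmx0 v1) eqxx.
set M := blaschke_mx c a Psi in hmax hs1 heig *.
set s := mxnorm2 M in hmax hs1 heig *.
set u := M *m v1.
set p := cinner u v1.
set r := vnorm v1 ^+ 2.
set cp := cabs p.
set q := cp ^+ 2.
have hr0 : 0 < r.
  rewrite /r exprn_gt0 // lt_def vnorm_ge0 andbT; apply/eqP => h0.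
  by move: hv0; rewrite (vnorm_eq0 h0) eqxx.
have hcp0 : 0 <= cp by apply: cabs_ge0.
set D := (s ^+ 2 + 1) * (r + 1) * (cp + 1).
have hD0 : 0 < D by rewrite /D; apply: mulr_gt0; [apply: mulr_gt0|]; nra.
set e := D^-1.
have he0 : 0 < e by rewrite /e invr_gt0.
have heD : e * D = 1 by rewrite /e mulVf // gt_eqF.
set t := (e%:C)%C * p.
have ht : cabs t < 1.
  rewrite /t cabsM cabsR gtr0_norm // -/cp -heD ltr_pM2l //.
  have : 1 <= (s ^+ 2 + 1) * (r + 1) by nra.
  rewrite /D; nra.
have [c' [b [hpar hphi]]] := compose hPsi hc ha ht.
have hle := hmax c' b hpar.
set Phi := blaschke_mx c' b Psi in hle hphi.
set w := v1 - conjc t *: u.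
have hPw : Phi *m w = u - t *: v1.
  have -> : w = (1%:M - conjc t *: M) *m v1.
    by rewrite mulmxBl mul1mx -scalemxAl.
  by rewrite mulmxA hphi mulmxBl mul_scalar_mx.
have hb := mxnorm2_bound Phi w.
have hA0 := vnorm_ge0 (Phi *m w).
have hB0 := vnorm_ge0 w.
have hineq : vnorm (Phi *m w) ^+ 2 <= s ^+ 2 * vnorm w ^+ 2.
  have h1 : vnorm (Phi *m w) <= s * vnorm w.
    apply: (le_trans hb); apply: ler_wpM2r; [exact: hB0 | exact: hle].
  have h2 : 0 <= s * vnorm w by apply: mulr_ge0; [lra | exact: hB0].
  rewrite -exprMn; apply: lerXn2r; [exact: hA0 | exact: h2 | exact: h1].
have huu : cinner u u = ((s ^+ 2)%:C)%C * (r%:C)%C.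
  rewrite /u cinner_adj mulmxA heig cinnerZr; congr (_ * _).
    by apply/eqP; rewrite eq_complex /= oppr0 !eqxx.
  by rewrite /r vnorm2C.
have hvu : cinner v1 u = conjc p by rewrite cinnerC.
have hvv : cinner v1 v1 = (r%:C)%C by rewrite /r vnorm2C.
have hpp : (q%:C)%C = p * conjc p by rewrite /q /cp cabs2C.
have htc : conjc t = (e%:C)%C * conjc p.
  rewrite /t rmorphM /=; congr (_ * _).
  by apply/eqP; rewrite eq_complex /= oppr0 !eqxx.
have hqdef : q = cp ^+ 2 by [].
have hq0 : 0 <= q by rewrite /q sqr_ge0.
clearbody q r.
have hA : vnorm (Phi *m w) ^+ 2 = s ^+ 2 * r - 2 * e * q + e ^+ 2 * q * r.
  apply: complexI; rewrite vnorm2C hPw !cinnerBl !cinnerBr !cinnerZl !cinnerZr.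
  rewrite huu hvu hvv -/p htc /t.
  rewrite ?rmorphD ?rmorphN ?rmorphM ?rmorphXn ?rmorph_nat /= hpp; ring.
have hB : vnorm w ^+ 2 = r - 2 * e * q + e ^+ 2 * q * s ^+ 2 * r.
  apply: complexI; rewrite vnorm2C /w !cinnerBl !cinnerBr !cinnerZl !cinnerZr.
  rewrite conjcK huu hvu hvv -/p htc /t.
  rewrite ?rmorphD ?rmorphN ?rmorphM ?rmorphXn ?rmorph_nat /= hpp; ring.
set K := e * r * (s ^+ 2 + 1).
have hK : K * ((r + 1) * (cp + 1)) = r.
  rewrite /K; transitivity (r * (e * D)); first by rewrite /D; ring.
  by rewrite heD mulr1.
have hK1 : K < 1.
  have hpos : 0 < (r + 1) * (cp + 1) by apply: mulr_gt0; lra.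
  rewrite -(ltr_pM2r hpos) mul1r hK; nra.
have hid : e * q * (s ^+ 2 - 1) * (2 - K) = vnorm (Phi *m w) ^+ 2 - s ^+ 2 * vnorm w ^+ 2.
  by rewrite hA hB /K; ring.
have hZ : 0 < e * (s ^+ 2 - 1) * (2 - K).
  apply: mulr_gt0; [apply: mulr_gt0|]; nra.
have hq : q = 0 by nra.
apply: cabs_eq0; rewrite -/p -/cp.
by move: hq; rewrite hqdef => /eqP; rewrite sqrf_eq0 => /eqP.
Qed.
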